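(* If $\mathcal{F}:\mathcal{T}^Y\to\mathcal{T}^Z$ is a cover between trees of spheres, then the underlying map $F:T^Y\to T^Z$ is surjective (on vertices and edges).
   Context: Trees are finite connected graphs without cycles (vertex set $V$, edges $2$-element subsets of $V$, $E_v$ the set of edges containing $v$), regarded as the set $V\sqcup E$; leaves are vertices of valence $1$, the others are internal vertices ($IV$). A tree of spheres $\mathcal{T}^X$ marked by a finite set $X$ ($\ge3$ elements) consists of a tree $T^X$ whose leaf set is $X$ and, for each internal vertex $v$, a topological $2$-sphere $\mathcal{S}_v$ and an injection $i_v:E_v\to\mathcal{S}_v$; $X_v:=i_v(E_v)$. A cover $\mathcal{F}:\mathcal{T}^Y\to\mathcal{T}^Z$ consists of a map $F:T^Y\to T^Z$ sending vertices to vertices and each edge $\{v,w\}$ to the edge $\{F(v),F(w)\}$, with $F(Y)\subseteq Z$ and $F(IV^Y)\subseteq IV^Z$, and for each $v\in IV^Y$, $w=F(v)$, a topological branched covering $f_v:\mathcal{S}_v\to\mathcal{S}_w$ such that $f_v:\mathcal{S}_v\setminus Y_v\to\mathcal{S}_w\setminus Z_w$ is a covering map, $f_v\circ i_v=i_w\circ F$ on $E_v$, and for an edge $e=\{v_1,v_2\}$ between internal vertices $\deg_{i_{v_1}(e)}f_{v_1}=\deg_{i_{v_2}(e)}f_{v_2}$. *)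

(* Defs.v *)
From HB Require Import structures.
From mathcomp Require Import all_boot all_order all_algebra.
From mathcomp Require Import all_classical all_reals all_analysis.
From mathcomp Require Import Rstruct Rstruct_topology.

Set Implicit Arguments.
Unset Strict Implicit.
Unset Printing Implicit Defensive.

Import Order.TTheory GRing.Theory Num.Theory.
Local Open Scope classical_set_scope.
Local Open Scope ring_scope.

Notation RR := Rdefinitions.RbaseSymbolsImpl.R.

Definition valence (V : finType) (e : rel V) (v : V) : nat := #|[set w | e v w]|.
Definition is_leaf (V : finType) (e : rel V) (v : V) : bool := valence e v == 1%N.
Definition is_internal (V : finType) (e : rel V) (v : V) : bool := ~~ is_leaf e v.

Definition acyclic (V : finType) (e : rel V) : Prop :=
  ~ exists (x : V) (p : seq V),
      [/\ (2 <= size p)%N, uniq (x :: p), path e x p & e (last x p) x].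

Definition is_tree (V : finType) (e : rel V) : Prop :=
  [/\ symmetric e, irreflexive e, (forall x y, connect e x y) & acyclic e].

Definition unit_sphere : set (RR * RR * RR) :=
  [set p | p.1.1 ^+ 2 + p.1.2 ^+ 2 + p.2 ^+ 2 = 1].

Definition open_disk : set (RR * RR) := [set p | p.1 ^+ 2 + p.2 ^+ 2 < 1].

(* complex multiplication on R^2 and the power map z |-> z^d *)
Definition cmul (p q : RR * RR) : RR * RR :=
  (p.1 * q.1 - p.2 * q.2, p.1 * q.2 + p.2 * q.1).
Fixpoint cpow (d : nat) (p : RR * RR) : RR * RR :=
  match d with
  | O => (1, 0)
  | S d' => cmul (cpow d' p) p
  end.

(* a topological 2-sphere: a space homeomorphic to the unit sphere of R^3,
   i.e. admitting a topological embedding into R^3 with image the unit sphere *)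
Definition is_top_sphere (S : topologicalType) : Prop :=
  exists h : S -> RR * RR * RR,
    [/\ continuous h, injective h, range h = unit_sphere &
        forall O : set S, open O ->
          exists W : set (RR * RR * RR), open W /\ h @` O = W `&` unit_sphere].

(* phi restricted to U is a homeomorphism of the open set U onto the open
   unit disk, sending x to 0 *)
Definition disk_chart (S : topologicalType) (U : set S) (x : S)
    (phi : S -> RR * RR) : Prop :=
  [/\ open U, U x, phi x = (0, 0) &
    [/\ {within U, continuous phi},
      (forall y z, U y -> U z -> phi y = phi z -> y = z),
      phi @` U = open_disk &
      forall O : set S, open O -> O `<=` U -> open (phi @` O)]].

(* f has the local model z |-> z^d at x (d = local degree of f at x) *)
Definition local_model (A B : topologicalType) (f : A -> B) (x : A) (d : nat)
  : Prop :=
  (0 < d)%N /\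
  exists (U : set A) (W : set B) (phi : A -> RR * RR) (psi : B -> RR * RR),
    [/\ disk_chart U x phi, disk_chart W (f x) psi, f @` U `<=` W &
        forall y, U y -> psi (f y) = cpow d (phi y)].

Definition branched_covering (A B : topologicalType) (f : A -> B)
    (deg : A -> nat) : Prop :=
  continuous f /\ forall x, local_model f x (deg x).

Definition homeo_onto (A B : topologicalType) (f : A -> B)
    (P : set A) (W : set B) : Prop :=
  [/\ (forall y z, P y -> P z -> f y = f z -> y = z),
      f @` P = W &
      forall O : set A, open O -> O `<=` P -> open (f @` O)].

(* f (continuous) restricts to a covering map A' -> B' (Munkres' definition:
   surjective, every point of B' has an evenly covered open neighbourhood) *)
Definition covering_map_on (A B : topologicalType) (f : A -> B)
    (A' : set A) (B' : set B) : Prop :=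
  f @` A' = B' /\
  forall b, B' b ->
    exists W : set B, [/\ open W, W `<=` B', W b &
      exists (I : Type) (P : I -> set A),
        [/\ (forall i, open (P i)),
            (forall i j, i <> j -> P i `&` P j = set0),
            (forall a, (exists i, P i a) <-> (A' a /\ W (f a))) &
            forall i, homeo_onto f (P i) W]].

(* The marking set X is the set of leaves of the tree.  An edge {v,w} is
   seen at v as the neighbour w; so i v : V -> S v restricted to the
   neighbours of v encodes the injection i_v : E_v -> S_v. *)
Record tree_of_spheres := TreeOfSpheres {
  tvert : finType;
  tadj : rel tvert;
  tadj_tree : is_tree tadj;
  tleaves_ge3 : (3 <= #|[set v | is_leaf tadj v]|)%N;
  tsphere : tvert -> topologicalType;
  tsphere_top : forall v, is_internal tadj v -> is_top_sphere (tsphere v);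
  tinj : forall v : tvert, tvert -> tsphere v;
  tinj_inj : forall v, is_internal tadj v ->
    forall w1 w2, tadj v w1 -> tadj v w2 -> tinj v w1 = tinj v w2 -> w1 = w2
}.

Definition marked_pts (T : tree_of_spheres) (v : tvert T) : set (tsphere v) :=
  [set tinj v w | w in [set w | tadj v w]].

Arguments marked_pts : clear implicits.
Arguments marked_pts {T} v.
Record tos_cover (TY TZ : tree_of_spheres) := Cover {
  cF : tvert TY -> tvert TZ;
  cF_edge : forall v w, tadj v w -> tadj (cF v) (cF w);
  cF_leaf : forall v, is_leaf (tadj (t:=TY)) v -> is_leaf (tadj (t:=TZ)) (cF v);
  cF_internal : forall v, is_internal (tadj (t:=TY)) v ->
                          is_internal (tadj (t:=TZ)) (cF v);
  cf : forall v : tvert TY, tsphere v -> tsphere (cF v);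
  cdeg : forall v : tvert TY, tsphere v -> nat;
  cf_branched : forall v, is_internal (tadj (t:=TY)) v ->
    branched_covering (@cf v) (@cdeg v);
  cf_covering : forall v, is_internal (tadj (t:=TY)) v ->
    covering_map_on (@cf v) (~` (marked_pts v)) (~` (marked_pts (cF v)));
  cf_compat : forall v, is_internal (tadj (t:=TY)) v ->
    forall w, tadj v w -> @cf v (tinj v w) = tinj (cF v) (cF w);
  cdeg_edge : forall v1 v2,
    is_internal (tadj (t:=TY)) v1 -> is_internal (tadj (t:=TY)) v2 ->
    tadj v1 v2 -> @cdeg v1 (tinj v1 v2) = @cdeg v2 (tinj v2 v1)
}.
Arguments cf {TY TZ} t v _.
Arguments cdeg {TY TZ} t v _.
Arguments cF {TY TZ} t _.

(* Main.v *)
Require Import Defs.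
From mathcomp Require Import all_boot all_order all_algebra.
From mathcomp Require Import all_classical all_reals all_analysis.
From mathcomp Require Import Rstruct Rstruct_topology.
From mathcomp Require Import lra ring.
Import Order.TTheory GRing.Theory Num.Theory.
Import numFieldNormedType.Exports.
Local Open Scope classical_set_scope.
Local Open Scope ring_scope.
Lemma g_cont : continuous (fun p : (RR*RR*RR)%type => p.1.1 ^+ 2 + p.1.2 ^+ 2 + p.2 ^+ 2).
Proof.
have c1 : continuous (fun p : (RR*RR*RR)%type => p.1) by move=> p; exact: cvg_fst.
have c2 : continuous (fun p : (RR*RR*RR)%type => p.2) by move=> p; exact: cvg_snd.
have c11 : continuous (fun p : (RR*RR)%type => p.1) by move=> p; exact: cvg_fst.
have c12 : continuous (fun p : (RR*RR)%type => p.2) by move=> p; exact: cvg_snd.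
have -> : (fun p : (RR*RR*RR)%type => p.1.1 ^+ 2 + p.1.2 ^+ 2 + p.2 ^+ 2) =
   (fun p => p.1.1 * p.1.1 + p.1.2 * p.1.2 + p.2 * p.2).
  by apply: funext => p; rewrite !expr2.
have d1 : continuous (fun p : (RR*RR*RR)%type => p.1.1) by move=> q; exact: (continuous_comp (c1 q) (c11 _)).
have d2 : continuous (fun p : (RR*RR*RR)%type => p.1.2) by move=> q; exact: (continuous_comp (c1 q) (c12 _)).
move=> p.
apply: (@continuousD _ RR^o _ (fun p : (RR*RR*RR)%type => p.1.1 * p.1.1 + p.1.2 * p.1.2) (fun p => p.2 * p.2)).
  apply: (@continuousD _ RR^o _ (fun p : (RR*RR*RR)%type => p.1.1 * p.1.1) (fun p => p.1.2 * p.1.2)).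
- exact: (continuousM (d1 p) (d1 p)).
- exact: (continuousM (d2 p) (d2 p)).
- exact: (continuousM (c2 p) (c2 p)).
Qed.
Lemma sphere_closed : closed unit_sphere.
Proof.
have -> : unit_sphere = (fun p : (RR*RR*RR)%type => p.1.1 ^+ 2 + p.1.2 ^+ 2 + p.2 ^+ 2) @^-1` [set x | x = 1] by [].
apply: (proj1 (continuous_closedP _) g_cont). exact: closed_eq.
Qed.
Lemma sphere_compact : compact unit_sphere.
Proof.
apply: (@subclosed_compact _ unit_sphere (`[-1, 1] `*` `[-1, 1] `*` `[-1, (1:RR)]) sphere_closed).
  apply: compact_setX; first apply: compact_setX; exact: segment_compact.
case=> [[a b] c]; rewrite /unit_sphere /= => H.
have hb : forall x : RR, x ^+ 2 <= 1 -> x \in `[-1, 1].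
  move=> x hx; rewrite in_itv /= -ler_norml.
  have h := normr_ge0 x; rewrite -[x ^+ 2]real_normK ?num_real // in hx; nra.
have a0 := sqr_ge0 a; have b0 := sqr_ge0 b; have c0 := sqr_ge0 c.
split; first split; rewrite /= ?inE; apply: hb; lra.
Qed.
Lemma top_sphere_compact {S : topologicalType} : is_top_sphere S -> compact [set: S].
Proof.
move=> [h [hc hi hr ho]] F FF _.
have [|q [sq clq]] := sphere_compact (h @ F) _ _.
  by rewrite /= -hr; apply: filterS filterT => x _; exists x.
have : range h q by rewrite hr.
case=> p _ hpq; exists p; split => //.
move=> B D FB; rewrite nbhsE => -[U [oU Up] UD].
have [W [oW hOW]] := ho U oU.
have Wq : W q.
  have : (h @` U) (h p) by exists p.
  by rewrite hOW hpq => -[].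
have FhB : F (h @^-1` (h @` B)) by apply: filterS FB => x Bx; exists x.
have [y [[b Bb hby] Wy]] := clq _ _ FhB (open_nbhs_nbhs (conj oW Wq)).
have : (h @` U) y by rewrite hOW; split => //; rewrite -hr -hby; exists b.
case=> o Uo hoy; exists b; split => //; apply: UD.
by rewrite -(hi o b) // hoy hby.
Qed.
Lemma rot_pts (a b e : RR) : 0 < a^+2 + b^+2 -> a^+2 + b^+2 <= 1 -> 0 < e ->
  exists g : nat -> (RR*RR)%type, injective g /\ forall n,
    [/\ (g n).1^+2 + (g n).2^+2 = a^+2+b^+2, `|a - (g n).1| < e & `|b - (g n).2| < e].
Proof.
move=> ab0 ab1 e0.
pose s0 : RR := Num.min (e / 8) (1/2).
have s00 : 0 < s0 by rewrite lt_min; apply/andP; split; lra.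
have s0e : s0 <= e / 8 by rewrite ge_min lexx.
have s01 : s0 <= 1/2 by rewrite ge_min lexx orbT.
pose t (n : nat) : RR := s0 / (n.+1)%:R.
have tpos n : 0 < t n by rewrite divr_gt0 // ltr0n.
have tle n : t n <= s0.
  rewrite /t ler_pdivrMr ?ltr0n //.
  have : 1 <= (n.+1)%:R :> RR by rewrite ler1n.
  nra.
pose c (n : nat) : RR := (1 - t n ^+ 2) / (1 + t n ^+ 2).
pose s (n : nat) : RR := (2 * t n) / (1 + t n ^+ 2).
have D0 n : 1 + t n ^+ 2 != 0 by apply: lt0r_neq0; have := sqr_ge0 (t n); lra.
have cs1 n : c n ^+ 2 + s n ^+ 2 = 1.
  rewrite /c /s; have := D0 n; move: (t n) => x hx; field.
  done.
have Dge n : 1 <= 1 + t n ^+ 2 by have := sqr_ge0 (t n); lra.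
have cb n : 0 <= 1 - c n <= 2 * t n ^+ 2.
  have -> : 1 - c n = 2 * t n ^+ 2 / (1 + t n ^+ 2).
    rewrite /c; have := D0 n; move: (t n) => x hx; field.
    done.
  have hD : 0 < 1 + t n ^+ 2 by have := Dge n; lra.
  have h2 := sqr_ge0 (t n); have h3 := Dge n.
  rewrite divr_ge0 ?ler_pdivrMr //=; nra.
have sb n : 0 <= s n <= 2 * t n.
  have hD : 0 < 1 + t n ^+ 2 by have := Dge n; lra.
  have h2 := tpos n; have h3 := Dge n.
  rewrite /s divr_ge0 ?ler_pdivrMr //=; nra.
have ha : -1 <= a <= 1 by have := sqr_ge0 b; nra.
have hb : -1 <= b <= 1 by have := sqr_ge0 a; nra.
exists (fun n => (a * c n - b * s n, a * s n + b * c n)); split.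
  move=> n m [e1 e2].
  have X0 : (a ^+ 2 + b ^+ 2) * (c n - c m) = 0.
    have -> : (a ^+ 2 + b ^+ 2) * (c n - c m) =
      a * ((a * c n - b * s n) - (a * c m - b * s m)) + b * ((a * s n + b * c n) - (a * s m + b * c m)) by ring.
    by rewrite e1 e2 !subrr; ring.
  have Y0 : (a ^+ 2 + b ^+ 2) * (s n - s m) = 0.
    have -> : (a ^+ 2 + b ^+ 2) * (s n - s m) =
      a * ((a * s n + b * c n) - (a * s m + b * c m)) - b * ((a * c n - b * s n) - (a * c m - b * s m)) by ring.
    by rewrite e1 e2 !subrr; ring.
  move/eqP: Y0; rewrite mulf_eq0 (gt_eqF ab0) /= subr_eq0 => /eqP hs.
  have htt : t n = t m.
    have h1 : t n * (1 + t m ^+ 2) = t m * (1 + t n ^+ 2).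
      move: hs; rewrite /s; have := D0 n; have := D0 m.
      move: (t n) (t m) => x y hy hx hxy.
      have := congr1 (fun z => z * (1 + x ^+ 2) * (1 + y ^+ 2) / 2) hxy.
      rewrite /=. move=> h; rewrite -[LHS]/(_) .
      transitivity (2 * x / (1 + x ^+ 2) * (1 + x ^+ 2) * (1 + y ^+ 2) / 2); first by field.
      by rewrite h; field.
    have h2 : (t n - t m) * (1 - t n * t m) = 0.
      have -> : (t n - t m) * (1 - t n * t m) = t n * (1 + t m ^+ 2) - t m * (1 + t n ^+ 2) by ring.
      by rewrite h1 subrr.
    move/eqP: h2; rewrite mulf_eq0 => /orP[]; first by rewrite subr_eq0 => /eqP.
    have := tle n; have := tle m; have := tpos n; have := tpos m.
    move: (t n) (t m) => x y hy hx hym hxm /eqP h.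
    have : x * y <= s0 * s0 by nra.
    nra.
  have hk k : (k.+1)%:R = s0 / t k :> RR.
    rewrite /t; have hs0 : s0 != 0 by rewrite gt_eqF.
    have hk0 : (k.+1)%:R != 0 :> RR by rewrite pnatr_eq0.
    field; by rewrite hs0 andbT addrC natr1.
  have : (n.+1)%:R = (m.+1)%:R :> RR by rewrite !hk htt.
  by move/eqP; rewrite eqr_nat => /eqP [].
move=> n /=; split.
- have := cs1 n; move: (c n) (s n) => x y h.
  have -> : (a * x - b * y) ^+ 2 + (a * y + b * x) ^+ 2 = (a ^+ 2 + b ^+ 2) * (x ^+ 2 + y ^+ 2) by ring.
  by rewrite h mulr1.
- rewrite ltr_norml; have := cb n; have := sb n; have := tle n; have := tpos n.
  move: (c n) (s n) (t n) => x y z; nra.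
- rewrite ltr_norml; have := cb n; have := sb n; have := tle n; have := tpos n.
  move: (c n) (s n) (t n) => x y z; nra.
Qed.

Lemma nbhsR (a : RR) (A : set RR) : nbhs a A -> exists2 e : RR, 0 < e & forall x, `|a - x| < e -> A x.
Proof. move=> /(@nbhs_normP _ RR^o) [e e0 h]; exists e => // x hx; exact: h. Qed.

Lemma sphere_dense (q : (RR*RR*RR)%type) (W : set (RR*RR*RR)%type) :
  unit_sphere q -> nbhs q W ->
  exists g : nat -> (RR*RR*RR)%type, injective g /\ forall n, unit_sphere (g n) /\ W (g n).
Proof.
case: q => [[a b] c]; rewrite /unit_sphere /= => hq.
move=> [[P Q] [nP nQ] sub].
move: nP => [[P1 P2] [n1 n2] sub2] /=.
have [e1 e10 h1] := @nbhsR a P1 n1.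
have [e2 e20 h2] := @nbhsR b P2 n2.
have [e3 e30 h3] := @nbhsR c Q nQ.
have Qc : Q c := nbhs_singleton nQ.
have P1a : P1 a := nbhs_singleton n1.
have a0 := sqr_ge0 a; have b0 := sqr_ge0 b; have c0 := sqr_ge0 c.
have [ab0|ab0] := ltP 0 (a ^+ 2 + b ^+ 2).
  have hab1 : a ^+ 2 + b ^+ 2 <= 1 by lra.
  have he : 0 < Num.min e1 e2 by rewrite lt_min e10 e20.
  have [g [gi gp]] := @rot_pts a b (Num.min e1 e2) ab0 hab1 he.
  exists (fun n => (g n, c)); split.
    by move=> n m [] /gi.
  move=> n; have [g1 g2 g3] := gp n; split; first by rewrite /= g1.
  apply: sub; split => //; apply: sub2; split.
  - by apply: h1; apply: (lt_le_trans g2); rewrite ge_min lexx.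
  - by apply: h2; apply: (lt_le_trans g3); rewrite ge_min lexx orbT.
have hbc : 0 < b ^+ 2 + c ^+ 2 by lra.
have hbc1 : b ^+ 2 + c ^+ 2 <= 1 by lra.
have he : 0 < Num.min e2 e3 by rewrite lt_min e20 e30.
have [g [gi gp]] := @rot_pts b c (Num.min e2 e3) hbc hbc1 he.
exists (fun n => ((a, (g n).1), (g n).2)); split.
  move=> n m [] e1' e2'; apply: gi; move: e1' e2'; case: (g n) => ? ?; case: (g m) => ? ? /= -> -> //.
move=> n; have [g1 g2 g3] := gp n; split; first by rewrite /= -addrA g1 addrA.
apply: sub; split; first (apply: sub2; split => //).
- by apply: h2; apply: (lt_le_trans g2); rewrite ge_min lexx.
- by apply: h3; apply: (lt_le_trans g3); rewrite ge_min lexx orbT.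
Qed.

Lemma no_inj_nat (T : finType) (G : nat -> T) : injective G -> False.
Proof.
move=> gi.
have u : uniq (map G (iota 0 #|T|.+1)) by rewrite map_inj_uniq ?iota_uniq.
have := uniq_leq_size u (s2 := enum T) (fun x _ => mem_enum T x).
by rewrite size_map size_iota -cardE ltnn.
Qed.

Lemma local_surj (TY TZ : tree_of_spheres) (FF : tos_cover TY TZ) (v : tvert TY) :
  is_internal (tadj (t:=TY)) v ->
  forall u, tadj (cF FF v) u -> exists x, tadj v x /\ cF FF x = u.
Proof.
move=> hv u hu.
have hw := cF_internal FF hv.
case: (pselect (exists x, tadj v x /\ cF FF x = u)) => // hne; exfalso.
pose z := tinj (cF FF v) u.
have [fimg _] := cf_covering FF hv.
have zm : marked_pts (cF FF v) z by exists u.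
have notimg : forall y, cf FF v y <> z.
  move=> y hy; case: (pselect (marked_pts v y)).
  - case=> x hx hxy; apply: hne; exists x; split => //.
    apply: (tinj_inj hw) => //; first exact: cF_edge.
    by rewrite -(cf_compat FF hv hx) hxy.
  - move=> nm; have : (~` marked_pts (cF FF v)) (cf FF v y) by rewrite -fimg; exists y.
    by rewrite hy.
have Sc := top_sphere_compact (tsphere_top hv) : compact [set: tsphere v].
have [h [hc hi hr ho]] := tsphere_top hw.
have fc : continuous (cf FF v) := (cf_branched FF hv).1.
have Kc : compact ((h \o cf FF v) @` setT).
  apply: continuous_compact Sc; apply: continuous_subspaceT.
  by move=> x; apply: continuous_comp; [exact: fc|exact: hc].
have Kcl : closed ((h \o cf FF v) @` setT).
  apply: compact_closed Kc; exact: (@norm_hausdorff _ (RR^o*RR^o*RR^o)%type).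
have nK : nbhs (h z) (~` ((h \o cf FF v) @` setT)).
  apply: open_nbhs_nbhs; split; first by apply: closed_openC.
  by move=> [y _ /= /hi]; apply: notimg.
have sz : unit_sphere (h z) by rewrite -hr; exists z.
have [g [gi gp]] := @sphere_dense _ _ sz nK.
have : forall n, exists m, h (tinj (cF FF v) m) = g n.
  move=> n; have [sg ng] := gp n.
  have : range h (g n) by rewrite hr.
  case=> y _ hy.
  case: (pselect (marked_pts (cF FF v) y)).
    by case=> m _ e; exists m; rewrite e.
  move=> ny; have : (~` marked_pts (cF FF v)) y by [].
  rewrite -fimg => -[y' _ hy']; exfalso; apply: ng; exists y' => //=.
  by rewrite hy' hy.
case/choice => G hG.
apply: (@no_inj_nat _ G) => n m e; apply: gi; by rewrite -hG -hG e.
Qed.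

Lemma valenceE (V : finType) (e : rel V) v : valence e v = #|finset (e v)|.
Proof.
rewrite /valence; apply: eq_card => x. rewrite [in RHS]inE.
apply/idP/idP; first by rewrite in_setE.
by move=> h; rewrite in_setE.
Qed.

Lemma step {TY TZ : tree_of_spheres} {FF : tos_cover TY TZ} {v : tvert TY} :
  forall u, tadj (cF FF v) u -> exists x, tadj v x /\ cF FF x = u.
Proof.
move=> u hu.
case hl: (is_leaf (tadj (t:=TY)) v); last first.
  by apply: local_surj => //; rewrite /is_internal hl.
have hl' := cF_leaf FF hl.
have [x hx] : exists x, finset (tadj v) = [set x]%SET by apply/cards1P; rewrite -valenceE; exact: hl.
have : x \in finset (tadj v) by rewrite hx set11.
rewrite inE => hvx; exists x; split => //.
have [y hy] : exists y, finset (tadj (cF FF v)) = [set y]%SET by apply/cards1P; rewrite -valenceE; exact: hl'.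
have e1 : u \in finset (tadj (cF FF v)) by rewrite inE.
have e2 : cF FF x \in finset (tadj (cF FF v)) by rewrite inE; exact: cF_edge.
by move: e1 e2; rewrite hy !inE => /eqP -> /eqP ->.
Qed.

Theorem corollary2p20 (TY TZ : tree_of_spheres) (FF : tos_cover TY TZ) :
  (forall w : tvert TZ, exists v : tvert TY, cF FF v = w) /\
  (forall w1 w2 : tvert TZ, tadj w1 w2 ->
     exists v1 v2 : tvert TY, [/\ tadj v1 v2, cF FF v1 = w1 & cF FF v2 = w2]).
Proof.
have surj : forall w : tvert TZ, exists v : tvert TY, cF FF v = w.
  move=> w.
  have : (0 < #|[set v | is_leaf (tadj (t:=TY)) v]|)%N.
    by apply: leq_trans (tleaves_ge3 TY).
  case/card_gt0P => v0 _.
  have [_ _ hcon _] := tadj_tree TZ.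
  have /connectP [p hp ->] := hcon (cF FF v0) w.
  elim: p v0 hp => [|y p IH] v0 /=; first by exists v0.
  case/andP => hy hp.
  have [x [_ hx]] := step _ hy.
  by have := IH x; rewrite hx; apply.
split => // w1 w2 h12.
have [v1 hv1] := surj w1.
rewrite -hv1 in h12.
have [x [hx e]] := step _ h12.
by exists v1, x.
Qed.
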